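(* Let $G$ be a countable connected graph containing no alternating ray, and let $T$ be a normal spanning tree of $G$ with root $r$. Then $\mathrm{rank}_T(v)$ is defined for every vertex $v\in V(G)$.
   Context: A ray is a one-way infinite path; it is alternating if it passes through infinitely many vertices of finite degree and infinitely many of infinite degree (degrees taken in $G$). A spanning tree $T$ with root $r$ induces the tree order $\le$ ($u\le v$ iff $u$ lies on the path in $T$ from $r$ to $v$); $T$ is normal if the endpoints of every edge of $G$ are $\le$-comparable. $\lfloor v\rfloor=\{u:u\ge v\}$. The $T$-rank is defined by transfinite recursion: $\mathrm{rank}_T(v)=0$ if $\lfloor v\rfloor$ consists only of vertices of finite degree or only of vertices of infinite degree. For an ordinal $\alpha>0$, a vertex $v$ of infinite (resp. finite) degree has $\mathrm{rank}_T(v)=\alpha$ if no rank smaller than $\alpha$ has been assigned to $v$ and every vertex of finite (resp. infinite) degree in $\lfloor v\rfloor\setminus\{v\}$ has been assigned a rank smaller than $\alpha$. *)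

(* Defs.v *)
From mathcomp Require Import all_boot.
Set Implicit Arguments. Unset Strict Implicit. Unset Printing Implicit Defensive.

Section Graphs.
Variable V : countType.

Definition simple_graph (adj : rel V) : Prop :=
  symmetric adj /\ irreflexive adj.

Definition spath (e : rel V) (x y : V) (p : seq V) : Prop :=
  path e x p /\ uniq (x :: p) /\ last x p = y.

Definition connected_graph (adj : rel V) : Prop :=
  forall x y : V, exists p, spath adj x y p.

Definition fin_deg (adj : rel V) (v : V) : Prop :=
  exists s : seq V, forall u, adj v u -> u \in s.

Definition is_ray (adj : rel V) (f : nat -> V) : Prop :=
  injective f /\ forall n, adj (f n) (f n.+1).

Definition alternating_ray (adj : rel V) (f : nat -> V) : Prop :=
  is_ray adj f /\
  (forall N, exists n, N <= n /\ fin_deg adj (f n)) /\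
  (forall N, exists n, N <= n /\ ~ fin_deg adj (f n)).

Definition has_cycle (t : rel V) : Prop :=
  exists x p, path t x p /\ uniq (x :: p) /\ 2 <= size p /\ t (last x p) x.

Definition spanning_tree (adj : rel V) (t : rel V) : Prop :=
  simple_graph t /\ subrel t adj /\ connected_graph t /\ ~ has_cycle t.

Definition tle (t : rel V) (r u v : V) : Prop :=
  exists p, spath t r v p /\ u \in r :: p.

Definition normal_tree (adj t : rel V) (r : V) : Prop :=
  spanning_tree adj t /\
  forall x y, adj x y -> tle t r x y \/ tle t r y x.

(* "rank_T(v) is defined": the set of vertices receiving a T-rank under the
   transfinite recursion of the paper is the least set closed under the
   three clauses below (rank 0; rank alpha > 0 for infinite-degree vertices;
   rank alpha > 0 for finite-degree vertices). *)
Inductive rank_defined (adj t : rel V) (r : V) : V -> Prop :=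
| rank_zero v :
    ((forall u, tle t r v u -> fin_deg adj u) \/
     (forall u, tle t r v u -> ~ fin_deg adj u)) ->
    rank_defined adj t r v
| rank_inf v :
    ~ fin_deg adj v ->
    (forall u, tle t r v u -> u <> v -> fin_deg adj u -> rank_defined adj t r u) ->
    rank_defined adj t r v
| rank_fin v :
    fin_deg adj v ->
    (forall u, tle t r v u -> u <> v -> ~ fin_deg adj u -> rank_defined adj t r u) ->
    rank_defined adj t r v.

End Graphs.

(* Main.v *)
Require Import Defs.
From mathcomp Require Import all_boot.
Set Implicit Arguments. Unset Strict Implicit.

Lemma cyc_of (V : countType) (t : rel V) : symmetric t ->
  forall x a b p q y, a != b -> path t x (a::p) -> path t x (b::q) ->
  uniq (x::a::p) -> uniq (x::b::q) -> last a p = y -> last b q = y ->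
  has_cycle t.
Proof.
move=> tsym x a b p q y ab P1 P2 U1 U2 L1 L2.
set s1 := a :: p in P1 U1 *; set s2 := b :: q in P2 U2 *.
have hy1 : y \in s1 by rewrite -L1 mem_last.
have hy2 : y \in s2 by rewrite -L2 mem_last.
have hs : has (mem s2) s1 by apply/hasP; exists y.
set i := find (mem s2) s1.
have hi : i < size s1 by rewrite -has_find.
set z := nth x s1 i.
have zs2 : z \in s2 by exact: (nth_find x hs).
set j := index z s2.
have hj : j < size s2 by rewrite index_mem.
have hs2z : has (pred1 z) s2 by apply/hasP; exists z => //=.
have nz : ~~ has (pred1 z) (take j s2).
  by rewrite has_take // ltnn.
have nd : ~~ has (mem s2) (take i s1) by rewrite has_take // ltnn.
move: U1 U2 => /= /andP[xs1 U1] /andP[xs2 U2].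
have T1 : take i.+1 s1 = rcons (take i s1) z by rewrite (take_nth x).
have T2 : take j.+1 s2 = rcons (take j s2) z by rewrite (take_nth x) // nth_index.
have Pc : path t x (rcons (take i.+1 s1 ++ rev (take j s2)) x).
  have Pa : path t x (take i.+1 s1) by apply: take_path.
  have Pb : path t x (rcons (take j s2) z) by rewrite -T2; apply: take_path.
  have Pb1 : path (fun u v => t v u) z (rcons (rev (take j s2)) x).
    by rewrite -rev_cons -(belast_rcons x (take j s2) z) -{1}(last_rcons x (take j s2) z) rev_path.
  have Pb' : path t z (rcons (rev (take j s2)) x).
    by rewrite -(@eq_path _ (fun u v => t v u)) // => u v; rewrite tsym.
    have Lz : last x (take i.+1 s1) = z by rewrite T1 last_rcons.
  by rewrite rcons_cat cat_path Pa Lz.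
move: Pc; rewrite rcons_path => /andP[Pc Lc].
exists x, (take i.+1 s1 ++ rev (take j s2)).
split; first exact: Pc.
split; last split; last exact: Lc.
  have U1' : uniq s1 by [].
  have U2' : uniq s2 by [].
  rewrite cons_uniq cat_uniq rev_uniq (take_uniq _ U1') (take_uniq _ U2') !andbT mem_cat mem_rev.
  apply/andP; split.
    by apply/negP => /orP[] /mem_take; apply/negP.
  apply/hasP => -[w]; rewrite mem_rev => wj; rewrite T1 /= mem_rcons inE => /orP[/eqP wz|wi].
    by move/hasP: nz; apply; exists w => //=; rewrite wz.
  by move/hasP: nd; apply; exists w => //; exact: mem_take wj.
rewrite size_cat size_rev size_takel // size_takel; last exact: ltnW.
have [i0|ipos] := eqVneq i 0; last by rewrite addSn ltnS (leq_trans _ (leq_addr j i)) // lt0n.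
have za : z = a by rewrite /z i0.
by rewrite i0 /j za /= eq_sym (negbTE ab).
Qed.

Lemma spath_uniq (V : countType) (t : rel V) : symmetric t -> ~ has_cycle t ->
  forall x y p q, spath t x y p -> spath t x y q -> p = q.
Proof.
move=> tsym nc x y p; elim: p x => [|a p IH] x q [Pp [Up Lp]] [Pq [Uq Lq]].
  case: q Pq Uq Lq => [//|b q] _ /= /andP[xq _] Lq; exfalso.
  have := mem_last b q; rewrite [last b q]Lq -Lp /= => H; by rewrite H in xq.
case: q Pq Uq Lq => [|b q] Pq Uq Lq.
  exfalso; move: Up => /= /andP[xp _].
  have := mem_last a p; rewrite [last a p]Lp -Lq /= => H; by rewrite H in xp.
case: (eqVneq a b) => [ab|ab].
  rewrite -ab in Pq Uq Lq *; congr (_ :: _); apply: (IH a).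
    split; first by move: Pp => /= /andP[].
    by split; [move: Up => /= /andP[] | exact Lp].
  split; first by move: Pq => /= /andP[].
  by split; [move: Uq => /= /andP[] | exact Lq].
exfalso; apply: nc; exact: (cyc_of tsym ab Pp Pq Up Uq Lp Lq).
Qed.

From Stdlib Require Import Classical ClassicalEpsilon.

Lemma prefix_lemma (V : countType) (t : rel V) r (P : V -> seq V) :
  symmetric t -> ~ has_cycle t -> (forall v, spath t r v (P v)) ->
  forall u v, u \in r :: P v -> r :: P u = take (size (P u)).+1 (r :: P v).
Proof.
move=> tsym nc PP u v uv.
set q := P v; set k := index u (r :: q).
have hk : k < size (r :: q) by rewrite index_mem.
have [Pq [Uq Lq]] := PP v.
have E : take k.+1 (r :: q) = rcons (take k (r :: q)) u.
  by rewrite (take_nth r) // nth_index.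
have S : spath t r u (take k q).
  split; first exact: take_path.
  split; first by rewrite -[r :: take k q]/(take k.+1 (r :: q)) take_uniq.
  by rewrite -(last_cons r r) -[r :: take k q]/(take k.+1 (r :: q)) E last_rcons.
have Pu : P u = take k q by apply: (spath_uniq tsym nc (PP u) S).
have sz : size (P u) = k.
  by rewrite Pu size_takel //; move: hk => /=; rewrite ltnS.
by rewrite sz Pu.
Qed.

Theorem lemma3p2 (V : countType) (adj : rel V) (t : rel V) (r : V) :
  simple_graph adj ->
  connected_graph adj ->
  (forall f : nat -> V, ~ alternating_ray adj f) ->
  normal_tree adj t r ->
  forall v : V, rank_defined adj t r v.
Proof.
move=> _ _ noray [[[tsym tirr] [tadj [tconn tnc]]] _] v0.
pose P := fun v => proj1_sig (constructive_indefinite_description _ (tconn r v)).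
have PP : forall v, spath t r v (P v).
  by move=> v; rewrite /P; case: constructive_indefinite_description.
have tleP : forall u v, tle t r u v -> u \in r :: P v.
  move=> u v [p [Sp up]]; by rewrite (spath_uniq tsym tnc (PP v) Sp).
pose Spec := fun w u => w \in r :: P u /\ u <> w /\
  (fin_deg adj u <-> ~ fin_deg adj w) /\ ~ rank_defined adj t r u.
have step : forall w, ~ rank_defined adj t r w -> exists u, Spec w u.
  move=> w Hw; case: (classic (fin_deg adj w)) => fw.
    apply: NNPP => H; apply: Hw; apply: rank_fin => // u tu uw fu.
    apply: NNPP => Hu; apply: H; exists u; rewrite /Spec; split; first exact: (tleP _ _ tu).
    by split=> //; split=> //; split=> // _; apply: fw.
  apply: NNPP => H; apply: Hw; apply: rank_inf => // u tu uw fu.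
  apply: NNPP => Hu; apply: H; exists u; rewrite /Spec; split; first exact: (tleP _ _ tu).
  by split=> //; split=> //; split.
apply: NNPP => H0.
pose g := fun w => epsilon (inhabits w) (Spec w).
pose c := fun n => iter n g v0.
have cS : forall n, ~ rank_defined adj t r (c n) /\ Spec (c n) (c n.+1).
  elim=> [|n [Hn Sn]].
    by split=> //; apply: (epsilon_spec (inhabits v0) (Spec v0)); apply: step.
  split; first by case: Sn => [_ [_ [_ ]]].
  by apply: (epsilon_spec (inhabits (c n.+1)) (Spec (c n.+1))); apply: step; case: Sn => [_ [_ [_ ]]].
pose Q := fun n => r :: P (c n).
pose sP := fun n => size (P (c n)).
have F1 : forall n, Q n = take (sP n).+1 (Q n.+1).
  move=> n; apply: (prefix_lemma tsym tnc PP); by case: (cS n) => _ [].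
have lastQ : forall n, nth r (Q n) (sP n) = c n.
  move=> n; have [_ [_ L]] := PP (c n).
  by rewrite /Q /sP -{3}L -(last_cons r r) -nth_last.
have F2 : forall n, sP n < sP n.+1.
  move=> n; have le : sP n <= sP n.+1.
    have := congr1 size (F1 n); rewrite /= size_take /=.
    case: ltnP => h E; first exact: ltnW.
    by case: E; rewrite /sP /= => ->.
  rewrite ltn_neqAle le andbT; apply/negP => /eqP E.
  have: Q n = Q n.+1 by rewrite F1 E take_oversize.
  move=> EQ; have := lastQ n; rewrite EQ E lastQ.
  by case: (cS n) => _ [_ [ne _]].

have mono : forall n m, n <= m -> sP n <= sP m.
  move=> n m /subnK <-; elim: (m - n) => [|k IH] //.
  by rewrite addSn; exact: leq_trans IH (ltnW (F2 _)).
have F3 : forall n m, n <= m -> Q n = take (sP n).+1 (Q m).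
  move=> n m /subnK <-; elim: (m - n) => [|k IH]; first by rewrite add0n take_oversize.
  rewrite addSn {1}IH F1 take_takel //.
  by rewrite ltnS mono // leq_addl.
have szn : forall n, n <= sP n.
  elim=> [|n IH] //; exact: leq_ltn_trans IH (F2 n).
pose f := fun k => nth r (Q k) k.
have key : forall k n, k <= sP n -> f k = nth r (Q n) k.
  move=> k n kn; rewrite /f (F3 k (maxn k n) (leq_maxl _ _)) (F3 n (maxn k n) (leq_maxr _ _)).
  by rewrite !nth_take ?ltnS ?szn.
have fc : forall n, f (sP n) = c n by move=> n; rewrite (key _ n) // lastQ.
have alt : forall n, fin_deg adj (c n.+1) <-> ~ fin_deg adj (c n).
  by move=> n; case: (cS n) => _ [_ [_ []]].
apply: (noray f); split; [split|split].
- move=> i j E; pose n := maxn i j.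
  have hi : i <= sP n := leq_trans (leq_maxl i j) (szn n).
  have hj : j <= sP n := leq_trans (leq_maxr i j) (szn n).
  rewrite (key i n hi) (key j n hj) in E.
  have [_ [U _]] := PP (c n).
  by apply/eqP; rewrite -(nth_uniq r _ _ U) ?E //= ltnS.
- move=> k.
  have h1 : k <= sP k.+1 := leq_trans (leqnSn k) (szn _).
  rewrite (key k k.+1 h1) (key k.+1 k.+1 (szn _)).
  have [Pk _] := PP (c k.+1).
  by apply: tadj; move/(pathP r): Pk => /(_ k); apply.
- move=> N; case: (classic (fin_deg adj (c N))) => h.
    by exists (sP N); rewrite fc; split; [exact: szn|].
  exists (sP N.+1); rewrite fc; split; first exact: leq_trans (leqnSn N) (szn _).
  by apply/alt.
- move=> N; case: (classic (fin_deg adj (c N))) => h.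
    exists (sP N.+1); rewrite fc; split; first exact: leq_trans (leqnSn N) (szn _).
    by move/alt; apply.
  by exists (sP N); rewrite fc; split; [exact: szn|].
Qed.
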